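(* For a positive integer $h$ and a prime $p$, let $m_p(h)$ denote the exponent of $p$ in $h$ (so $p^{m_p(h)}\mid h$, $p^{m_p(h)+1}\nmid h$). Define $$W_2(h)=\begin{cases}\tfrac14, & m_2(h)=0,\\[2pt] \dfrac{2^{m_2(h)+1}-3}{2^{m_2(h)+2}}, & m_2(h)\ge 1,\end{cases}\qquad \mathscr{T}_h=2W_2(h)\prod_{\substack{p\equiv 3 \ (\mathrm{mod}\ 4)\\ p\mid h}}\frac{1-p^{-(m_p(h)+1)}}{1-p^{-1}},$$ and let $\beta=\frac{1}{\sqrt2}\prod_{p\equiv 3\ (\mathrm{mod}\ 4)}(1-p^{-2})^{-1/2}$ (the Landau–Ramanujan constant). Then for every $\varepsilon>0$, as $H\to\infty$, $$\sum_{\substack{1\le d_1,d_2\le H\\ d_1\neq d_2}}\mathscr{T}_{|d_2-d_1|}=2\sum_{1\le h\le H-1}(H-h)\,\mathscr{T}_h=\beta^2H^2+O_\varepsilon(H^{1+\varepsilon}).$$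
   Context: Here $p$ ranges over primes. $\mathscr{T}_h$ is the singular series of the Connors–Keating pair-correlation conjecture for integers representable as a sum of two squares. *)

(* Defs.v *)
From Stdlib Require Import Reals.
From mathcomp Require Import all_boot.

Open Scope R_scope.

Fixpoint sumR (n : nat) (f : nat -> R) : R :=
  match n with O => 0 | S k => sumR k f + f (S k) end.
Fixpoint prodR (n : nat) (f : nat -> R) : R :=
  match n with O => 1 | S k => prodR k f * f (S k) end.

Definition W2 (h : nat) : R :=
  let m := logn 2 h in
  if (m == 0)%N then / 4 else (2 ^ (m + 1) - 3) / 2 ^ (m + 2).

Definition Tser (h : nat) : R :=
  2 * W2 h *
  prodR h (fun p => if [&& prime p, (p %% 4 == 3)%N & (p %| h)%N]
                    then (1 - / (INR p) ^ (logn p h + 1)) / (1 - / INR p)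
                    else 1).

Definition beta_partial (N : nat) : R :=
  prodR N (fun p => if prime p && (p %% 4 == 3)%N
                    then Rpower (1 - / (INR p) ^ 2) (- (1 / 2))
                    else 1).

Definition pair_sum (H : nat) : R :=
  sumR H (fun d1 => sumR H (fun d2 =>
    if (d1 == d2)%N then 0 else Tser ((d2 - d1) + (d1 - d2))%N)).

Definition weighted_sum (H : nat) : R :=
  2 * sumR (H - 1) (fun h => INR (H - h) * Tser h).

(* Main.v *)
Require Import Defs.
From Stdlib Require Import Reals Lra Lia.
From mathcomp Require Import all_boot zify.
Open Scope R_scope.

Lemma sumR_ext n f g : (forall i, (0 < i <= n)%N -> f i = g i) -> sumR n f = sumR n g.
Proof.
elim: n => [|n IH] H //=. rewrite IH; last by move=> i Hi; apply H; lia.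
by rewrite H //; lia.
Qed.

Lemma prodR_ext n f g : (forall i, (0 < i <= n)%N -> f i = g i) -> prodR n f = prodR n g.
Proof.
elim: n => [|n IH] H //=. rewrite IH; last by move=> i Hi; apply H; lia.
by rewrite H //; lia.
Qed.

Lemma sumR_plus n f g : sumR n (fun i => f i + g i) = sumR n f + sumR n g.
Proof. elim: n => [|n IH] /=; [lra| rewrite IH; lra]. Qed.

Lemma sumR_minus n f g : sumR n (fun i => f i - g i) = sumR n f - sumR n g.
Proof. elim: n => [|n IH] /=; [lra| rewrite IH; lra]. Qed.

Lemma sumR_scal n c f : sumR n (fun i => c * f i) = c * sumR n f.
Proof. elim: n => [|n IH] /=; [lra| rewrite IH; lra]. Qed.

Lemma sumR_0 n : sumR n (fun _ => 0) = 0.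
Proof. elim: n => [|n IH] /=; lra. Qed.

Lemma sumR_const n c : sumR n (fun _ => c) = INR n * c.
Proof. elim: n => [|n IH]; first by simpl; lra.
rewrite S_INR Rmult_plus_distr_r -IH. simpl sumR. lra. Qed.

Lemma sumR_le n f g : (forall i, (0 < i <= n)%N -> f i <= g i) -> sumR n f <= sumR n g.
Proof.
elim: n => [|n IH] H /=; first lra.
have := IH (fun i Hi => H i ltac:(lia)). have := H n.+1 ltac:(lia). lra.
Qed.

Lemma sumR_nonneg n f : (forall i, (0 < i <= n)%N -> 0 <= f i) -> 0 <= sumR n f.
Proof. move=> H; rewrite -(sumR_0 n); exact: sumR_le. Qed.

Lemma sumR_abs n f : Rabs (sumR n f) <= sumR n (fun i => Rabs (f i)).
Proof.
elim: n => [|n IH] /=; first by rewrite Rabs_R0; lra.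
have := Rabs_triang (sumR n f) (f n.+1). lra.
Qed.

Lemma sumR_zero_ext m n f : (m <= n)%N -> (forall i, (m < i <= n)%N -> f i = 0) ->
  sumR n f = sumR m f.
Proof.
move=> Hmn; elim: n Hmn => [|n IH] Hmn H.
  by have -> : m = 0%N by lia.
case: (eqVneq m n.+1) => [->//|Hne].
rewrite /= IH; [|lia|move=> i Hi; apply H; lia]. rewrite H; [lra|lia].
Qed.

Lemma sumR_mono m n f : (m <= n)%N -> (forall i, (m < i <= n)%N -> 0 <= f i) ->
  sumR m f <= sumR n f.
Proof.
move=> Hmn; elim: n Hmn => [|n IH] Hmn H.
  have -> : m = 0%N by lia. lra.
case: (eqVneq m n.+1) => [->|Hne]; first lra.
have := IH ltac:(lia) (fun i Hi => H i ltac:(lia)). have := H n.+1 ltac:(lia). simpl; lra.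
Qed.

Lemma sumR_swap n m (f : nat -> nat -> R) :
  sumR n (fun i => sumR m (fun j => f i j)) = sumR m (fun j => sumR n (fun i => f i j)).
Proof.
elim: n => [|n IH] /=; first by rewrite sumR_0.
by rewrite IH -sumR_plus.
Qed.

Lemma prodR_mult n f g : prodR n (fun i => f i * g i) = prodR n f * prodR n g.
Proof. elim: n => [|n IH] /=; [lra| rewrite IH; lra]. Qed.

Lemma prodR_one n : prodR n (fun _ => 1) = 1.
Proof. elim: n => [|n IH] /=; lra. Qed.

Lemma prodR_const n c : prodR n (fun _ => c) = c ^ n.
Proof. elim: n => [|n IH] /=; [lra| rewrite IH; lra]. Qed.

Lemma prodR_one_ext m n f : (m <= n)%N -> (forall i, (m < i <= n)%N -> f i = 1) ->
  prodR n f = prodR m f.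
Proof.
move=> Hmn; elim: n Hmn => [|n IH] Hmn H.
  by have -> : m = 0%N by lia.
case: (eqVneq m n.+1) => [->//|Hne].
rewrite /= IH; [|lia|move=> i Hi; apply H; lia]. rewrite H; [lra|lia].
Qed.

Lemma prodR_point n q c : (0 < q <= n)%N ->
  prodR n (fun i => if i == q then c else 1) = c.
Proof.
elim: n => [|n IH] Hq /=; first lia.
case: (eqVneq q n.+1) => [E|Hne].
  subst q. rewrite ?eqxx (@prodR_one_ext 0) /=; [lra|lia|].
  move=> i Hi; case: eqP => //; lia.
rewrite IH; [lra|lia].
Qed.

Lemma prodR_nonneg n f : (forall i, (0 < i <= n)%N -> 0 <= f i) -> 0 <= prodR n f.
Proof.
elim: n => [|n IH] H /=; first lra.
apply Rmult_le_pos; [apply IH|apply H]; move=> *; try apply H; lia.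
Qed.

Lemma prodR_le n f g : (forall i, (0 < i <= n)%N -> 0 <= f i <= g i) -> prodR n f <= prodR n g.
Proof.
elim: n => [|n IH] H /=; first lra.
have H1 := IH (fun i Hi => H i ltac:(lia)). have H2 := H n.+1 ltac:(lia).
have H3 : 0 <= prodR n f by apply prodR_nonneg => i Hi; have := H i ltac:(lia); lra.
apply Rmult_le_compat; lra.
Qed.

Lemma prodR_ge1 n f : (forall i, (0 < i <= n)%N -> 1 <= f i) -> 1 <= prodR n f.
Proof. move=> H; rewrite -(prodR_one n); apply prodR_le => i Hi; have := H i Hi; lra. Qed.

Lemma prodR_sq n f : prodR n (fun i => f i ^ 2) = prodR n f ^ 2.
Proof. elim: n => [|n IH] /=; [lra| rewrite IH; ring]. Qed.

Lemma sumR_mult X k G : (0 < k)%N ->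
  sumR X (fun d => if (k %| d)%N then G (d %/ k)%N else 0) = sumR (X %/ k) G.
Proof.
move=> Hk; elim: X => [|X IH] /=; first by rewrite div0n.
rewrite IH. case: ifP => Hd.
  have -> : (X.+1 %/ k = (X %/ k).+1)%N.
    move/dvdnP: Hd => [q Hq]. rewrite Hq mulnK //.
    have : (X = q * k - 1)%N by lia. move=> ->.
    have Hq0 : (0 < q)%N by nia.
    have -> : (q * k - 1 = (q - 1) * k + (k - 1))%N by nia.
    rewrite divnMDl // divn_small; lia.
  by [].
have -> : (X.+1 %/ k = X %/ k)%N.
  rewrite -addn1. 
  have := divn_eq X k. have := ltn_pmod X Hk. move=> Hm He.
  have Hm2 : (X %% k + 1 < k)%N.
    have : (X %% k + 1 != k)%N.
      apply/eqP => E. move/negbT: Hd => /negP; apply. apply/dvdnP; exists (X %/ k).+1. lia.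
    lia.
  have -> : (X + 1 = X %/ k * k + (X %% k + 1))%N by lia.
  by rewrite divnMDl // (divn_small Hm2) addn0.
lra.
Qed.
Arguments sumR_ext {n f g}.
Arguments prodR_ext {n f g}.
Lemma sumR_S n f : sumR n.+1 f = sumR n f + f n.+1.
Proof. by []. Qed.
Lemma prodR_S n f : prodR n.+1 f = prodR n f * f n.+1.
Proof. by []. Qed.

Lemma INR_expn a b : INR (a ^ b) = INR a ^ b.
Proof. elim: b => [|b IH]; first by rewrite expn0. by rewrite expnS mult_INR IH. Qed.

Definition Qb (d : nat) : bool := all (fun p => p %% 4 == 3)%N (primes d).
Definition wt (s d : nat) : R := (/ INR d) ^ s.
Definition geo (r : R) (m : nat) : R := sumR m.+1 (fun i => r ^ (i - 1)).
Definition fac (s h p : nat) : R :=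
  if [&& prime p, (p %% 4 == 3)%N & (p %| h)%N] then geo (wt s p) (logn p h) else 1.
Definition Fprod s h := prodR h (fac s h).
Definition Fsum s h := sumR h (fun d => if (d %| h)%N && Qb d then wt s d else 0).

Lemma sumR_point n q c : sumR n (fun i => if i == q then c else 0) = if (0 < q <= n)%N then c else 0.
Proof.
elim: n => [|n IH] /=; first by case: ifP => //; lia.
rewrite IH. case: (eqVneq n.+1 q) => [E|Hne].
  subst q. have -> : (0 < n.+1 <= n)%N = false by lia. rewrite ifT; [lra|lia].
case: ifP => H1; case: ifP => H2; try lra; lia.
Qed.

Lemma wtM s a b : (0 < a)%N -> (0 < b)%N -> wt s (a * b) = wt s a * wt s b.
Proof.
move=> Ha Hb. rewrite /wt mult_INR Rinv_mult -Rpow_mult_distr //.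
Qed.

Lemma wtX s a j : (0 < a)%N -> wt s (a ^ j) = wt s a ^ j.
Proof.
move=> Ha. rewrite /wt INR_expn pow_inv -!pow_mult Nat.mul_comm pow_inv //.
Qed.

Lemma wt1 s : wt s 1 = 1.
Proof. by rewrite /wt /= Rinv_1 pow1. Qed.

Lemma QbM a b : (0 < a)%N -> (0 < b)%N -> Qb (a * b) = Qb a && Qb b.
Proof.
move=> Ha Hb. rewrite /Qb.
apply/allP/andP => [H|[/allP H1 /allP H2]].
  split; apply/allP => p Hp; apply H; rewrite primesM // Hp ?orbT //.
move=> p; rewrite primesM // => /orP[]; [apply H1|apply H2].
Qed.

Lemma QbX q j : prime q -> (q %% 4 == 3)%N -> Qb (q ^ j).
Proof.
move=> Hq H3. case: j => [|j]; first by rewrite expn0.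
by rewrite /Qb primesX // primes_prime //= H3.
Qed.

Lemma Qb_prime_dvd d p : Qb d -> (0 < d)%N -> prime p -> (p %| d)%N -> (p %% 4 == 3)%N.
Proof.
move=> /allP H Hd Hp Hpd. apply H. by rewrite mem_primes Hp Hd Hpd.
Qed.

Lemma core s h : (0 < h)%N -> Fprod s h = Fsum s h.
Proof.
elim/ltn_ind: h => h IH Hh.
case Hhas: (has (fun p => p %% 4 == 3)%N (primes h)); last first.
  have Hno : forall p, prime p -> (p %| h)%N -> (p %% 4 == 3)%N = false.
    move=> p Hp Hph. apply/negP => H3. move/hasPn: Hhas => /(_ p).
    rewrite mem_primes Hp Hh Hph => /(_ isT). by rewrite H3.
  rewrite /Fprod (prodR_ext (g:=fun _ => 1)); last first.
    move=> p Hp; rewrite /fac. case: (boolP (prime p)) => //= Hpr.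
    case: (boolP (p %| h)%N) => Hd; [by rewrite Hno // | by rewrite andbF].
  rewrite prodR_one /Fsum (sumR_ext (g := fun d => if d == 1%N then 1 else 0)).
    rewrite sumR_point ifT //; lia.
  move=> d Hd. case: (eqVneq d 1%N) => [->|Hd1].
    by rewrite dvd1n /= wt1.
  case: (boolP ((d %| h)%N && Qb d)) => // /andP[Hdh HQ].
  have Hd2 : (1 < d)%N by lia.
  have Hp := pdiv_prime Hd2.
  have := @Qb_prime_dvd d (pdiv d) HQ ltac:(lia) Hp (pdiv_dvd d).
  by rewrite Hno // (dvdn_trans (pdiv_dvd d) Hdh).
move/hasP: Hhas => [q Hqh Hq3].
move: Hqh; rewrite mem_primes => /and3P[Hq _ Hqdh].
have Hq1 := prime_gt1 Hq.
have [m Hmdef] : exists m, logn q h = m by exists (logn q h).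
have Hm : (0 < m)%N by rewrite -Hmdef logn_gt0 mem_primes Hq Hh Hqdh.
have Hqm : (q ^ m %| h)%N by rewrite pfactor_dvdn // Hmdef.
have [h' Hhh] : exists h', h = (q ^ m * h')%N by exists (h %/ q ^ m); rewrite mulnC divnK.
have Hqm1 : (1 < q ^ m)%N by rewrite -(expn0 q) ltn_exp2l.
have Hqm0 : (0 < q ^ m)%N by lia.
have Hh'0 : (0 < h')%N by nia.
have Hlog' : logn q h' = 0%N.
  have := Hmdef. rewrite Hhh lognM // lognX logn_prime // eqxx muln1. lia.
have Hqh' : ~~ (q %| h')%N.
  by rewrite -(expn1 q) pfactor_dvdn // Hlog'.
have Hlt : (h' < h)%N by nia.
have IH' := IH h' Hlt Hh'0.
set G := geo (wt s q) m.
have Hqleh : (0 < q <= h)%N by rewrite (dvdn_leq Hh Hqdh); lia.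
have EP : Fprod s h = G * Fprod s h'.
  rewrite /Fprod -(@prodR_point h q G Hqleh).
  rewrite -(@prodR_one_ext h' h (fac s h')); first last.
  - move=> i Hi. rewrite /fac. case: (boolP (i %| h')%N) => Hd; last by rewrite !andbF.
    have := dvdn_leq Hh'0 Hd. lia.
  - nia.
  rewrite -prodR_mult. apply prodR_ext => p Hp.
  case: (eqVneq p q) => [->|Hpq].
    rewrite ?eqxx /fac Hq Hq3 Hqdh (negbTE Hqh') /= Hmdef /G. lra.
  rewrite Rmult_1_l /fac.
  case: (boolP (prime p)) => Hp' //=.
  have -> : (p %| h)%N = (p %| h')%N.
    by rewrite Hhh Euclid_dvdM // Euclid_dvdX // dvdn_prime2 // (negbTE Hpq).
  have -> : logn p h = logn p h'.
    by rewrite Hhh lognM // lognX logn_prime // (negbTE Hpq) muln0 add0n.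
  by [].
have ES : Fsum s h = G * Fsum s h'.
  set X := fun d => if (d %| h)%N && Qb d then wt s d else 0.
  rewrite /Fsum -/X.
  rewrite (sumR_ext (g := fun d => sumR m.+1 (fun i => if logn q d == (i - 1)%N then X d else 0))); last first.
    move=> d Hd.
    rewrite (sumR_ext (g := fun i => if i == (logn q d).+1 then X d else 0)); last first.
      move=> i Hi. have -> : (logn q d == (i - 1)%N) = (i == (logn q d).+1) by lia. by [].
    rewrite sumR_point. case: ifP => // Hc. rewrite /X.
    case: (boolP (d %| h)%N) => Hdh //=.
    have := dvdn_leq_log q Hh Hdh. lia.
  rewrite sumR_swap /G /geo Rmult_comm -sumR_scal.
  apply sumR_ext => i Hi.
  have [j Hj] : exists j, (i - 1)%N = j by exists (i - 1)%N.
  rewrite Hj. have Hjm : (j <= m)%N by lia.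
  have Hqj0 : (0 < q ^ j)%N by rewrite expn_gt0; lia.
  set Y := fun e => if (e %| h')%N && Qb e then wt s e else 0.
  rewrite (sumR_ext (g := fun d => if (q ^ j %| d)%N then (fun e => wt s q ^ j * Y e) (d %/ q ^ j)%N else 0)); last first.
    move=> d Hd /=. case: (boolP (q ^ j %| d)%N) => Hqd; last first.
      case: eqP => // E. exfalso. move/negP: Hqd; apply. by rewrite pfactor_dvdn; lia.
    move/dvdnP: (Hqd) => [e He].
    have He0 : (0 < e)%N by nia.
    rewrite He mulnK // /X /Y.
    have HQ : Qb (e * q ^ j) = Qb e.
      by rewrite QbM // QbX // andbT.
    rewrite HQ wtM // wtX; last lia.
    rewrite lognM // lognX (logn_prime q Hq) eqxx muln1.
    case: (boolP (e %| h')%N) => Hed /=.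
      have Hqe : logn q e = 0%N.
        apply: logn_coprime. rewrite prime_coprime //. apply/negP => Hqe.
        move/negP: Hqh'; apply. exact: dvdn_trans Hqe Hed.
      rewrite Hqe add0n eqxx.
      have -> : (e * q ^ j %| h)%N.
        rewrite Hhh mulnC. apply: dvdn_mul => //. by apply: dvdn_exp2l.
      by case: (Qb e) => /=; lra.
    case: eqP => Hl; last lra. case: (boolP (e * q ^ j %| h)%N) => Hd' /=; last lra.
    exfalso. move/negP: Hed; apply.
    have Hqe : logn q e = 0%N by lia.
    have Hcop : coprime e (q ^ m).
      rewrite coprime_sym coprimeXl //.
      rewrite prime_coprime // -(expn1 q) pfactor_dvdn // Hqe. by [].
    rewrite -(Gauss_dvdr _ Hcop) -Hhh. exact: dvdn_trans (dvdn_mulr _ (dvdnn e)) Hd'.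
  rewrite (@sumR_mult h (q ^ j) (fun e => wt s q ^ j * Y e) Hqj0) sumR_scal.
  rewrite (@sumR_zero_ext h' (h %/ q ^ j)%N).
  - by rewrite /Y; lra.
  - rewrite Hhh. have -> : m = (j + (m - j))%N by lia.
    rewrite expnD -mulnA mulKn //. have : (0 < q ^ (m - j))%N by rewrite expn_gt0; lia. nia.
  - move=> e He. rewrite /Y. case: (boolP (e %| h')%N) => Hed //.
    have := dvdn_leq Hh'0 Hed. lia.
by rewrite EP ES IH'.
Qed.

Definition a2 (e : nat) : R := 2 * W2 e.
Definition v2 (e : nat) : R := / 2 ^ (logn 2 e).
Definition V2 (y : nat) : R := sumR y v2.
Definition A2 (y : nat) : R := sumR y a2.

Lemma prime2 : prime 2. Proof. by []. Qed.

Lemma logn2_odd j : logn 2 (2 * j).+1 = 0%N.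
Proof.
apply: logn_coprime. rewrite prime_coprime //. apply/negP. lia.
Qed.

Lemma logn2_double n : (0 < n)%N -> logn 2 (2 * n) = (logn 2 n).+1.
Proof. move=> Hn. by rewrite lognM // (logn_prime 2 prime2). Qed.

Lemma v2_odd j : v2 (2 * j).+1 = 1.
Proof. by rewrite /v2 logn2_odd /= Rinv_1. Qed.

Lemma v2_double n : (0 < n)%N -> v2 (2 * n) = v2 n / 2.
Proof.
move=> Hn. rewrite /v2 logn2_double //= Rinv_mult. lra.
Qed.

Lemma a2_odd j : a2 (2 * j).+1 = / 2.
Proof. rewrite /a2 /W2 logn2_odd /=. lra. Qed.

Lemma a2_even n : (0 < logn 2 n)%N -> a2 n = 1 - 3 / 2 * v2 n.
Proof.
move=> Hn. rewrite /a2 /W2 /v2. have -> : (logn 2 n == 0%N) = false by lia.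
have H2 : 0 < 2 ^ logn 2 n by apply pow_lt; lra.
rewrite !pow_add /=. field. lra.
Qed.

Lemma V2_double j : V2 (2 * j) = INR j + V2 j / 2.
Proof.
elim: j => [|j IH]; first by rewrite /V2 /=; lra.
have -> : (2 * j.+1 = (2 * j).+2)%N by lia.
rewrite /V2 /= -/(V2 (2 * j)) IH /V2.
have -> : (2 * j).+2 = (2 * j.+1)%N by lia.
rewrite v2_odd v2_double // -/(INR j.+1) S_INR. lra.
Qed.

Lemma V2_bound y : Rabs (V2 y - 2 * INR y / 3) <= 2 / 3.
Proof.
elim/ltn_ind: y => y IH.
case: (posnP y) => [->|Hy]; first by rewrite /V2 /= Rmult_0_r /Rdiv Rmult_0_l Rminus_0_r Rabs_R0; lra.
have [j [Ej|Ej]] : exists j, y = (2 * j)%N \/ y = (2 * j).+1 by exists (y %/ 2)%N; lia.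
- have := IH j ltac:(lia). subst y. rewrite V2_double mult_INR /=.
  move=> H. have -> : INR j + V2 j / 2 - 2 * (2 * INR j) / 3 = (V2 j - 2 * INR j / 3) / 2 by field.
  revert H; unfold Rabs; repeat case Rcase_abs; intros; lra.
- have := IH j ltac:(lia). subst y. rewrite /V2 sumR_S -/(V2 (2 * j)) v2_odd V2_double S_INR mult_INR /=.
  move=> H. have -> : INR j + V2 j / 2 + 1 - 2 * (2 * INR j + 1) / 3 = (V2 j - 2 * INR j / 3) / 2 + 1 / 3 by field.
  rewrite -/(V2 j) in H. revert H; unfold Rabs; repeat case Rcase_abs; intros; lra.
Qed.

Lemma A2_double j : A2 (2 * j) = 3 / 2 * INR j - 3 / 4 * V2 j.
Proof.
elim: j => [|j IH]; first by rewrite /A2 /V2 /=; lra.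
have -> : (2 * j.+1 = (2 * j).+2)%N by lia.
rewrite /A2 !sumR_S -/(A2 (2 * j)) IH /V2 sumR_S -/(V2 j).
have -> : (2 * j).+2 = (2 * j.+1)%N by lia.
rewrite a2_odd a2_even; last by rewrite logn2_double.
rewrite v2_double // S_INR. lra.
Qed.

Lemma A2_bound y : Rabs (A2 y - INR y / 2) <= / 2.
Proof.
have [j [Ej|Ej]] : exists j, y = (2 * j)%N \/ y = (2 * j).+1 by exists (y %/ 2)%N; lia.
- subst y. rewrite A2_double mult_INR /=.
  have := V2_bound j. 
  have -> : 3 / 2 * INR j - 3 / 4 * V2 j - 2 * INR j / 2 = - (3/4) * (V2 j - 2 * INR j / 3) by field.
  unfold Rabs; repeat case Rcase_abs; intros; lra.
- subst y. rewrite /A2 sumR_S -/(A2 (2 * j)) a2_odd A2_double S_INR mult_INR /=.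
  have := V2_bound j. 
  have -> : 3 / 2 * INR j - 3 / 4 * V2 j + / 2 - (2 * INR j + 1) / 2 = - (3/4) * (V2 j - 2 * INR j / 3) by field.
  unfold Rabs; repeat case Rcase_abs; intros; lra.
Qed.

Lemma geo_closed r m : r <> 1 -> geo r m = (1 - r ^ m.+1) / (1 - r).
Proof.
move=> Hr. have Hr' : 1 - r <> 0 by lra.
elim: m => [|m IH]; first by rewrite /geo /=; field.
rewrite /geo sumR_S -/(geo r m) IH. have -> : (m.+2 - 1 = m.+1)%N by lia.
have -> : r ^ m.+2 = r * r ^ m.+1 by []. field. exact Hr'.
Qed.

Lemma wt1_eq p : wt 1 p = / INR p.
Proof. by rewrite /wt pow_1. Qed.

Lemma Tser_eq h : (0 < h)%N -> Tser h = a2 h * Fsum 1 h.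
Proof.
move=> Hh. rewrite -core // /Tser /a2 /Fprod. congr (_ * _).
apply prodR_ext => p Hp. rewrite /fac.
case: (boolP [&& prime p, (p %% 4 == 3)%N & (p %| h)%N]) => // /and3P[Hpr _ _].
have Hp1 := prime_gt1 Hpr.
have HpR : 1 < INR p by apply (lt_INR 1); lia.
rewrite geo_closed wt1_eq; first by rewrite addn1 pow_inv.
move=> E. have : INR p = 1 by rewrite -[INR p]Rinv_inv E Rinv_1.
lra.
Qed.

Definition Z2 (x : nat) : R := sumR x (fun d => if Qb d then wt 2 d else 0).
Definition Harm (x : nat) : R := sumR x (fun d => / INR d).

Lemma Qb_odd d : Qb d -> (0 < d)%N -> logn 2 d = 0%N.
Proof.
move=> HQ Hd. apply logn_coprime. rewrite prime_coprime //. apply/negP => H2.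
by have := @Qb_prime_dvd d 2 HQ Hd prime2 H2.
Qed.

Lemma S_expand x : sumR x Tser = sumR x (fun d => if Qb d then wt 1 d * A2 (x %/ d) else 0).
Proof.
rewrite (sumR_ext (g := fun h => sumR x (fun d => if (d %| h)%N && Qb d then a2 h * wt 1 d else 0))); last first.
  move=> h Hh. rewrite Tser_eq; last lia. rewrite /Fsum -sumR_scal.
  rewrite (@sumR_zero_ext h x); last first.
  - move=> d Hd. case: (boolP (d %| h)%N) => Hdh /=; last lra.
    have := dvdn_leq (ltac:(lia) : (0 < h)%N) Hdh. lia.
  - lia.
  apply sumR_ext => d Hd. case: ifP => _; lra.
rewrite sumR_swap. apply sumR_ext => d Hd.
case: (boolP (Qb d)) => HQ; last first.
  rewrite (sumR_ext (g := fun _ => 0)) ?sumR_0 //. move=> h _. by rewrite andbF.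
rewrite (sumR_ext (g := fun h => if (d %| h)%N then (fun e => wt 1 d * a2 e) (h %/ d)%N else 0)); last first.
  move=> h Hh /=. rewrite andbT. case: (boolP (d %| h)%N) => Hdh //.
  rewrite Rmult_comm. congr (_ * _).
  have He : (0 < h %/ d)%N by rewrite divn_gt0; [apply dvdn_leq|]; lia.
  rewrite -{1}(divnK Hdh) /a2 /W2 lognM //; last lia. rewrite (@Qb_odd d HQ); last lia.
  by rewrite addn0.
rewrite (@sumR_mult x d (fun e => wt 1 d * a2 e)); last lia.
by rewrite sumR_scal.
Qed.

Lemma floor_bounds x d : (0 < d)%N ->
  INR (x %/ d) * INR d <= INR x < (INR (x %/ d) + 1) * INR d.
Proof.
move=> Hd. have E := divn_eq x d. have Hr := ltn_pmod x Hd.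
have Hr' : INR (x %% d) < INR d by apply lt_INR; lia.
rewrite {2 3}E plus_INR mult_INR. have := pos_INR (x %% d). lra.
Qed.

Lemma S_approx x : Rabs (sumR x Tser - INR x / 2 * Z2 x) <= Harm x.
Proof.
rewrite S_expand /Z2 -sumR_scal -sumR_minus.
apply: Rle_trans (sumR_abs _ _) _. apply sumR_le => d Hd.
have HdR : 0 < INR d by apply (lt_INR 0); lia.
case: (Qb d); last by rewrite Rmult_0_r Rminus_0_r Rabs_R0; apply Rlt_le, Rinv_0_lt_compat.
have -> : wt 1 d * A2 (x %/ d) - INR x / 2 * wt 2 d
   = / INR d * ((A2 (x %/ d) - INR (x %/ d) / 2) + (INR (x %/ d) - INR x / INR d) / 2).
  rewrite /wt /=. field. lra.
rewrite Rabs_mult Rabs_right; last by apply Rle_ge, Rlt_le, Rinv_0_lt_compat.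
rewrite -{2}(Rmult_1_r (/ INR d)). apply Rmult_le_compat_l; first by apply Rlt_le, Rinv_0_lt_compat.
have H1 := A2_bound (x %/ d).
have [F1 F2] := @floor_bounds x d ltac:(lia).
have H3 : INR x / INR d - 1 < INR (x %/ d) <= INR x / INR d.
  split.
  - apply (Rmult_lt_reg_r (INR d)) => //. rewrite Rmult_minus_distr_r /Rdiv Rmult_assoc Rinv_l; lra.
  - apply (Rmult_le_reg_r (INR d)) => //. rewrite /Rdiv Rmult_assoc Rinv_l; lra.
apply: Rle_trans (Rabs_triang _ _) _.
have : Rabs ((INR (x %/ d) - INR x / INR d) / 2) <= / 2.
  unfold Rabs; case Rcase_abs; intros; lra.
lra.
Qed.

Definition Pfac (p : nat) : R := if prime p && (p %% 4 == 3)%N then / (1 - / INR p ^ 2) else 1.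
Definition P (N : nat) : R := prodR N Pfac.

Lemma prime_r p : prime p -> 0 < / INR p ^ 2 <= / 4 /\ wt 2 p = / INR p ^ 2.
Proof.
move=> Hp. have Hp1 := prime_gt1 Hp.
have H2 : 2 <= INR p by apply (le_INR 2); lia.
split; last by rewrite /wt pow_inv.
split; first by apply Rinv_0_lt_compat, pow_lt; lra.
apply Rinv_le_contravar; first lra. simpl. nra.
Qed.

Arguments prime_r {p}.

Lemma inv_ge1 y : 0 < y <= 1 -> 1 <= / y.
Proof. move=> [H1 H2]. rewrite -Rinv_1. by apply Rinv_le_contravar. Qed.

Lemma Pfac_ge1 p : 1 <= Pfac p.
Proof.
rewrite /Pfac. case: ifP => [/andP[Hp _]|_]; last lra.
have [[H1 H2] _] := prime_r Hp. apply inv_ge1; lra.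
Qed.

Lemma Un_cv_ext u v l : (forall n, u n = v n) -> Un_cv u l -> Un_cv v l.
Proof. move=> E H eps He. have [N HN] := H eps He. exists N => n Hn. rewrite -E. by apply HN. Qed.

Lemma beta_sq N : beta_partial N ^ 2 = P N.
Proof.
rewrite /beta_partial -prodR_sq. apply prodR_ext => p Hp. rewrite /Pfac.
case: (boolP (prime p && (p %% 4 == 3)%N)) => [/andP[Hpr _]|_]; last by simpl; lra.
have [[H1 H2] _] := prime_r Hpr. set y := 1 - / INR p ^ 2.
have Hy : 0 < y by rewrite /y; lra.
rewrite /= Rmult_1_r -Rpower_plus.
have -> : - (1 / 2) + - (1 / 2) = - 1 by field.
by rewrite Rpower_Ropp Rpower_1.
Qed.

Lemma P_cv L : Un_cv beta_partial L -> Un_cv P (L ^ 2).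
Proof.
move=> HL. have := CV_mult _ _ _ _ HL HL.
have -> : L * L = L ^ 2 by simpl; ring.
apply Un_cv_ext => n. by rewrite -beta_sq /= Rmult_1_r.
Qed.

Lemma P_nonneg N : 0 <= P N.
Proof. apply prodR_nonneg => i _. have := Pfac_ge1 i. lra. Qed.

Lemma P_le L : Un_cv beta_partial L -> forall N, P N <= L ^ 2.
Proof.
move=> HL N. apply growing_ineq; last by apply P_cv.
move=> n. rewrite /P prodR_S -/(P n). have := Pfac_ge1 n.+1. have := P_nonneg n. nra.
Qed.

Lemma lim_le u l B : Un_cv u l -> (forall n, u n <= B) -> l <= B.
Proof.
move=> H HB. apply Rnot_lt_le => Hlt.
have [N HN] := H (l - B) ltac:(lra).
have := HN N (le_n N). have := HB N. unfold R_dist, Rabs; case Rcase_abs; intros; lra.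
Qed.

Lemma pow_le1 r n : 0 <= r <= 1 -> r ^ n <= 1.
Proof.
move=> Hr. elim: n => [|n IH] /=; first lra.
have := pow_le r n ltac:(lra). nra.
Qed.

Lemma geo_bounds r m : 0 <= r < 1 -> 1 <= geo r m <= / (1 - r).
Proof.
move=> Hr. rewrite geo_closed; last lra.
have H1 : 0 < 1 - r by lra.
have Hp : 0 <= r ^ m.+1 by apply pow_le; lra.
have Hp1 : r ^ m.+1 <= r by rewrite /=; have := pow_le1 r m ltac:(lra); have := pow_le r m ltac:(lra); nra.
split.
- apply (Rmult_le_reg_r (1 - r)) => //. rewrite /Rdiv Rmult_assoc Rinv_l; lra.
- rewrite /Rdiv. have := Rinv_0_lt_compat _ H1. nra.
Qed.

Lemma pow_dec r n m : 0 <= r <= 1 -> (n <= m)%N -> r ^ m <= r ^ n.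
Proof.
move=> Hr Hnm. have -> : m = (n + (m - n))%N by lia.
rewrite pow_add. have := pow_le r n ltac:(lra). have := pow_le1 r (m - n)%N ltac:(lra).
have := pow_le r (m - n)%N ltac:(lra). nra.
Qed.

Lemma prime_dvd_fact p N : prime p -> (p %| N`!)%N -> (p <= N)%N.
Proof.
move=> Hp. have Hp1 := prime_gt1 Hp. elim: N => [|N IH].
  rewrite fact0 dvdn1 => /eqP E. lia.
rewrite factS Euclid_dvdM // => /orP[H|H].
  have := dvdn_leq (ltn0Sn N) H. lia.
have := IH H. lia.
Qed.

Lemma fac_nondvd s h p : ~~ (p %| h)%N -> fac s h p = 1.
Proof. move=> H. by rewrite /fac (negbTE H) !andbF. Qed.

Lemma Fprod_N s N K : Fprod s (N`! ^ K.+1) = prodR N (fac s (N`! ^ K.+1)).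
Proof.
rewrite /Fprod. apply prodR_one_ext.
  have := fact_geq N. have : (N`! <= N`! ^ K.+1)%N.
    rewrite -{1}(expn1 (N`!)). apply leq_pexp2l; [apply fact_gt0|lia].
  lia.
move=> p Hp. case: (boolP (prime p)) => Hpr; last by rewrite /fac (negbTE Hpr).
apply fac_nondvd. rewrite Euclid_dvdX // andbT. apply/negP => Hd.
have := @prime_dvd_fact p N Hpr Hd. lia.
Qed.

Lemma wt_nonneg s d : 0 <= wt s d.
Proof. rewrite /wt. apply pow_le.
case: d => [|d]; first by rewrite /= Rinv_0; lra.
by apply Rlt_le, Rinv_0_lt_compat, (lt_INR 0); lia.
Qed.

Lemma Z2_le_P N : Z2 N <= P N.
Proof.
have HN := fact_geq N.
apply Rle_trans with (Fsum 2 (N`! ^ 1)).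
  rewrite /Fsum expn1.
  apply Rle_trans with (sumR N (fun d => if (d %| N`!)%N && Qb d then wt 2 d else 0)).
    apply Req_le, sumR_ext => d Hd. by rewrite dvdn_fact //.
  apply sumR_mono => // d Hd. case: ifP => _; [apply wt_nonneg|lra].
rewrite -core; last by rewrite expn1 fact_gt0.
rewrite Fprod_N /P. apply prodR_le => p Hp.
rewrite /fac /Pfac. case: (boolP (prime p)) => Hpr; last by rewrite ?andFb; lra.
have [[H1 H2] Hw] := prime_r Hpr.
case: (p %% 4 == 3)%N; rewrite ?andTb ?andFb; last lra.
case: ifP => _.
  rewrite Hw. have := geo_bounds (/ INR p ^ 2) (logn p (N`! ^ 1)) ltac:(lra). lra.
split; first lra. apply inv_ge1. lra.
Qed.

Lemma Z2_mono x y : (x <= y)%N -> Z2 x <= Z2 y.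
Proof. move=> H. apply sumR_mono => // d _. case: ifP => _; [apply wt_nonneg|lra]. Qed.

Lemma Z2_tail x y : (0 < x)%N -> Z2 y <= Z2 x + / INR x.
Proof.
move=> Hx. have HxR : 0 < INR x by apply (lt_INR 0); lia.
case: (leqP y x) => Hyx.
  have := @Z2_mono y x Hyx. have := Rinv_0_lt_compat _ HxR. lra.
suff : forall k, Z2 (x + k) <= Z2 x + / INR x - / INR (x + k).
  move=> /(_ (y - x)%N). have -> : (x + (y - x) = y)%N by lia.
  have : 0 < / INR y by apply Rinv_0_lt_compat, (lt_INR 0); lia. lra.
elim => [|k IH]; first by rewrite addn0; lra.
have -> : (x + k.+1 = (x + k).+1)%N by lia.
rewrite /Z2 sumR_S -/(Z2 (x + k)) -/(Z2 x).
have Hk : 0 < INR (x + k) by apply (lt_INR 0); lia.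
rewrite S_INR.
have : (if Qb (x + k).+1 then wt 2 (x + k).+1 else 0) <= / (INR (x + k) + 1) ^ 2.
  case: ifP => _; last by apply Rlt_le, Rinv_0_lt_compat, pow_lt; lra.
  by rewrite /wt S_INR pow_inv; lra.
have -> : / (INR (x + k) + 1) ^ 2 = / INR (x + k) - / (INR (x + k) + 1) - / (INR (x+k) * (INR (x + k) + 1) ^ 2).
  field. lra.
have : 0 < / (INR (x+k) * (INR (x + k) + 1) ^ 2).
  apply Rinv_0_lt_compat. apply Rmult_lt_0_compat => //. apply pow_lt; lra.
lra.
Qed.

Lemma bernoulli r n : 0 <= r <= 1 -> 1 - INR n * r <= (1 - r) ^ n.
Proof.
move=> Hr. elim: n => [|n IH]; first by simpl; lra.
rewrite S_INR; change ((1 - r) ^ n.+1) with ((1 - r) * (1 - r) ^ n). have := pos_INR n. have := pow_le (1 - r) n ltac:(lra). nra.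
Qed.

Lemma P_le_Z2 N x : (0 < x)%N -> P N <= Z2 x + / INR x.
Proof.
move=> Hx. set B := Z2 x + / INR x.
have key : forall K, P N * (1 - INR N * (/ 2) ^ K.+1) <= B.
  move=> K. set h := (N`! ^ K.+1)%N.
  have Hh : (0 < h)%N by rewrite /h expn_gt0 fact_gt0.
  have Hrho : 0 <= (/ 2) ^ K.+1 <= 1.
    split; [apply pow_le; lra| apply pow_le1; lra].
  apply Rle_trans with (Fprod 2 h).
    apply Rle_trans with ((1 - (/2) ^ K.+1) ^ N * P N).
      have := @bernoulli _ N Hrho. have := P_nonneg N. nra.
    rewrite Fprod_N -prodR_const /P -prodR_mult. apply prodR_le => p Hp.
    rewrite /Pfac /fac. case: (boolP (prime p)) => Hpr; last by rewrite ?andFb; lra.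
    have [[H1 H2] Hw] := prime_r Hpr.
    case: (p %% 4 == 3)%N; rewrite ?andTb ?andFb; last lra.
    have Hdh : (p %| h)%N by rewrite /h Euclid_dvdX // andbT dvdn_fact //; lia.
    rewrite Hdh Hw.
    set r := / INR p ^ 2 in H1 H2 Hw *. rewrite -/h.
    have Hm : (K.+1 <= logn p h)%N.
      rewrite /h lognX. have : (0 < logn p N`!)%N by rewrite logn_gt0 mem_primes Hpr fact_gt0 dvdn_fact //; lia.
      nia.
    have Hg := geo_bounds r (logn p h) ltac:(lra).
    split; first by apply Rmult_le_pos; [lra|apply Rlt_le, Rinv_0_lt_compat; lra].
    rewrite geo_closed; last lra.
    have : r ^ (logn p h).+1 <= (/ 2) ^ K.+1.
      apply Rle_trans with (r ^ K.+1).
        apply pow_dec; [lra|lia].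
      apply pow_incr; lra.
    have Hi := Rinv_0_lt_compat (1 - r) ltac:(lra).
    rewrite /Rdiv. nra.
  rewrite core //. apply Rle_trans with (Z2 h); last by apply Z2_tail.
  apply sumR_le => d Hd. case: (d %| h)%N => /=; last by case: ifP => _; [apply wt_nonneg|lra].
  lra.
apply Rnot_lt_le => Hlt.
have HN0 : 0 <= INR N * P N by have := pos_INR N; have := P_nonneg N; nra.
have [K HK] := pow_lt_1_zero (/ 2) ltac:(rewrite Rabs_right; lra) ((P N - B) / (INR N * P N + 1)) ltac:(apply Rdiv_lt_0_compat; lra).
have := HK K.+1 ltac:(lia). rewrite Rabs_right; last by apply Rle_ge, pow_le; lra.
move=> H. have := key K.
have H3 : INR N * P N * (/ 2) ^ K.+1 < P N - B.
  apply Rle_lt_trans with ((INR N * P N + 1) * (/ 2) ^ K.+1).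
    have := pow_le (/2) K.+1 ltac:(lra). nra.
  apply (Rmult_lt_reg_l (/ (INR N * P N + 1))). apply Rinv_0_lt_compat; lra.
  rewrite -Rmult_assoc Rinv_l; last lra. rewrite Rmult_1_l Rmult_comm. exact H.
nra.
Qed.

Lemma Z2_L L x : Un_cv beta_partial L -> (0 < x)%N ->
  Z2 x <= L ^ 2 <= Z2 x + / INR x.
Proof.
move=> HL Hx. split.
  apply Rle_trans with (P x); [apply Z2_le_P|apply P_le, HL].
apply lim_le with P; first by apply P_cv.
move=> n. by apply P_le_Z2.
Qed.

Lemma ln_le_sub1 y : 0 < y -> ln y <= y - 1.
Proof. move=> Hy. have := exp_ineq1_le (ln y). rewrite exp_ln //. lra. Qed.

Lemma ln_mono a b : 0 < a -> a <= b -> ln a <= ln b.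
Proof.
move=> Ha Hab. case: (Rle_lt_or_eq_dec _ _ Hab) => H.
  apply Rlt_le, ln_increasing; lra.
rewrite H; lra.
Qed.

Lemma Harm_bound x : (0 < x)%N -> Harm x <= 1 + ln (INR x).
Proof.
elim: x => [|x IH] Hx; first lia.
case: (posnP x) => [->|Hx0].
  rewrite /Harm /= ln_1. lra.
have HxR : 0 < INR x by apply (lt_INR 0); lia.
rewrite /Harm sumR_S -/(Harm x) S_INR.
have H1 := IH Hx0.
have : / (INR x + 1) <= ln (INR x + 1) - ln (INR x).
  have := ln_le_sub1 (INR x / (INR x + 1)) ltac:(apply Rdiv_lt_0_compat; lra).
  rewrite /Rdiv ln_mult; [|lra|apply Rinv_0_lt_compat; lra]. rewrite ln_Rinv; last lra.
  have -> : INR x * / (INR x + 1) - 1 = - / (INR x + 1) by field; lra.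
  lra.
lra.
Qed.

Lemma S_bound L k : Un_cv beta_partial L -> (0 < k)%N ->
  Rabs (sumR k Tser - L ^ 2 / 2 * INR k) <= 3 / 2 + ln (INR k).
Proof.
move=> HL Hk. have HkR : 0 < INR k by apply (lt_INR 0); lia.
have H1 := S_approx k. have H2 := @Harm_bound k Hk.
have [Z1 Z2'] := @Z2_L L k HL Hk.
have H3 : Rabs (INR k / 2 * Z2 k - L ^ 2 / 2 * INR k) <= / 2.
  have -> : INR k / 2 * Z2 k - L ^ 2 / 2 * INR k = INR k / 2 * (Z2 k - L ^ 2) by field.
  rewrite Rabs_mult Rabs_right; last lra.
  have : Rabs (Z2 k - L ^ 2) <= / INR k by unfold Rabs; case Rcase_abs; intros; lra.
  move=> H. apply Rle_trans with (INR k / 2 * / INR k).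
    apply Rmult_le_compat_l; lra.
  right. field. lra.
have := Rabs_triang (sumR k Tser - INR k / 2 * Z2 k) (INR k / 2 * Z2 k - L ^ 2 / 2 * INR k).
have -> : sumR k Tser - INR k / 2 * Z2 k + (INR k / 2 * Z2 k - L ^ 2 / 2 * INR k) = sumR k Tser - L ^ 2 / 2 * INR k by ring.
lra.
Qed.

Lemma sumR_shift n f : sumR n.+1 f = f 1%N + sumR n (fun d => f d.+1).
Proof.
elim: n => [|n IH]; first by simpl; lra.
rewrite sumR_S IH sumR_S. lra.
Qed.

Lemma sumR_refl n f : sumR n (fun d => f (n.+1 - d)%N) = sumR n f.
Proof.
elim: n => [|n IH] //.
rewrite sumR_shift. have -> : (n.+2 - 1 = n.+1)%N by lia.
rewrite (sumR_ext (g := fun d => f (n.+1 - d)%N)); last by move=> i Hi; congr f; lia.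
rewrite IH sumR_S. lra.
Qed.

Lemma pair_sum_eq n : pair_sum n.+1 = 2 * sumR n (fun k => sumR k Tser).
Proof.
rewrite /pair_sum. elim: n => [|n IH].
  simpl; lra.
set g := fun d1 d2 : nat => if d1 == d2 then 0 else Tser (d2 - d1 + (d1 - d2))%N.
have IH' : sumR n.+1 (fun d1 => sumR n.+1 (g d1)) = 2 * sumR n (fun k => sumR k Tser) := IH.
rewrite (sumR_ext (g := fun d1 => sumR n.+1 (g d1) + g d1 n.+2)); last by move=> *; rewrite sumR_S.
rewrite sumR_plus. rewrite [sumR n.+2 (fun d1 => sumR n.+1 (g d1))]sumR_S IH'.
rewrite [sumR n.+2 (fun d1 => g d1 n.+2)]sumR_S [sumR n.+1 (fun k => sumR k Tser)]sumR_S.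
have -> : g n.+2 n.+2 = 0 by rewrite /g eqxx.
have E1 : sumR n.+1 (g n.+2) = sumR n.+1 Tser.
  rewrite -sumR_refl. apply sumR_ext => d Hd. rewrite /g.
  case: eqP => [?|_]; [lia|]. congr Tser. lia.
have E2 : sumR n.+1 (fun d1 => g d1 n.+2) = sumR n.+1 Tser.
  rewrite -sumR_refl. apply sumR_ext => d Hd. rewrite /g.
  case: eqP => [?|_]; [lia|]. congr Tser. lia.
rewrite E1 E2. lra.
Qed.

Lemma abel n (T : nat -> R) : sumR n (fun h => INR (n.+1 - h) * T h) = sumR n (fun k => sumR k T).
Proof.
elim: n => [|n IH] //.
rewrite (sumR_ext (g := fun h => INR (n.+1 - h) * T h + T h)); last first.
  move=> h Hh. have -> : (n.+2 - h = (n.+1 - h).+1)%N by lia. rewrite S_INR. ring.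
rewrite sumR_plus [X in X + _ = _]sumR_S IH [RHS]sumR_S subnn. simpl INR. lra.
Qed.

Lemma weighted_eq n : weighted_sum n.+1 = 2 * sumR n (fun k => sumR k Tser).
Proof.
rewrite /weighted_sum. have -> : (n.+1 - 1 = n)%N by lia. by rewrite abel.
Qed.

Lemma sumR_INR n : sumR n INR = INR n * (INR n + 1) / 2.
Proof.
elim: n => [|n IH]; first by simpl; lra.
rewrite sumR_S IH S_INR. field.
Qed.

Lemma ln_le_rpow X eps : 1 <= X -> 0 < eps -> ln X <= Rpower X eps / eps /\ 1 <= Rpower X eps.
Proof.
move=> HX He. have Hl : 0 <= ln X by rewrite -ln_1; apply ln_mono; lra.
rewrite /Rpower. have := exp_ineq1_le (eps * ln X). move=> H.
split; last nra.
apply (Rmult_le_reg_l eps) => //. have -> : eps * (exp (eps * ln X) / eps) = exp (eps * ln X) by field; lra. lra.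
Qed.

Theorem theorem1 (L : R) (HL : Un_cv beta_partial L) :
  let beta := / sqrt 2 * L in
  (forall H : nat, pair_sum H = weighted_sum H) /\
  (forall eps : R, 0 < eps ->
     exists C : R, exists N : nat, forall H : nat, (N <= H)%nat ->
       Rabs (weighted_sum H - beta ^ 2 * (INR H) ^ 2)
         <= C * Rpower (INR H) (1 + eps)).
Proof.
move=> beta. split.
  case => [|n]; first by rewrite /pair_sum /weighted_sum /=; lra.
  by rewrite pair_sum_eq weighted_eq.
move=> eps He.
exists (L ^ 2 / 2 + 3 + 2 / eps), 1%N => H HH.
have [n En] : exists n, H = n.+1 by exists H.-1; lia.
subst H.
have Hb : beta ^ 2 = L ^ 2 / 2.
  rewrite /beta Rpow_mult_distr pow_inv pow2_sqrt; [field|lra].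
rewrite Hb weighted_eq.
set X := INR n.+1.
have HX : 1 <= X by rewrite /X S_INR; have := pos_INR n; lra.
have [Hln HR] := @ln_le_rpow X eps HX He.
set Rp := Rpower X eps in Hln HR *.
have Hsplit : 2 * sumR n (fun k => sumR k Tser) - L ^ 2 / 2 * X ^ 2
   = - (L ^ 2 / 2) * X + 2 * sumR n (fun k => sumR k Tser - L ^ 2 / 2 * INR k).
  rewrite sumR_minus sumR_scal sumR_INR /X S_INR. field.
rewrite Hsplit.
have Hsum : Rabs (sumR n (fun k => sumR k Tser - L ^ 2 / 2 * INR k)) <= INR n * (3 / 2 + ln X).
  apply: Rle_trans (sumR_abs _ _) _. rewrite -sumR_const. apply sumR_le => k Hk.
  apply Rle_trans with (3 / 2 + ln (INR k)); first by apply: S_bound; [exact HL|lia].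
  have : ln (INR k) <= ln X.
    apply ln_mono; first by apply (lt_INR 0); lia.
    rewrite /X. apply le_INR. lia.
  lra.
have HL2 : 0 <= L ^ 2 by apply pow2_ge_0.
have HnX : INR n <= X by rewrite /X S_INR; lra.
have Hn0 := pos_INR n.
apply: Rle_trans (Rabs_triang _ _) _.
rewrite Rabs_mult (Rabs_left1 (- _)); last nra.
rewrite Rabs_mult Rabs_right; last lra.
rewrite Rpower_plus Rpower_1; last lra. rewrite -/Rp.
have Hl0 : 0 <= ln X by rewrite -ln_1; apply ln_mono; lra.
have H2 : 2 / eps * Rp >= 2 * ln X.
  have -> : 2 / eps * Rp = 2 * (Rp / eps) by field; lra. lra.
have Hsum' : 2 * Rabs (sumR n (fun k => sumR k Tser - L ^ 2 / 2 * INR k)) <= X * (3 + 2 * ln X).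
  nra.
have : - - (L ^ 2 / 2) * X <= L ^ 2 / 2 * X * Rp by nra.
have : X * (3 + 2 * ln X) <= X * (3 * Rp + 2 / eps * Rp) by nra.
rewrite (Rabs_right 2); last lra.
have -> : (L ^ 2 / 2 + 3 + 2 / eps) * (X * Rp) = L ^ 2 / 2 * X * Rp + X * (3 * Rp + 2 / eps * Rp) by ring.
lra.
Qed.
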